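(* Let $r$ be a constant integer, $f\in\mathscr{F}_r$ given through an $r$-decomposition $(V_i,f_i)_{i=1}^m$, and $k$ an integer with $r<k\le n-1$, and suppose $V$ is connected. Then the star exploration algorithm outputs a connected set $S\subseteq V$ with $|S|\le k$ that is an $O(k^{r-1})$-approximate solution of the $\underline{k}$SPM problem, i.e. $\max\{f(T):T\subseteq V,|T|\le k\}\le O(k^{r-1})\cdot f(S)$. Star exploration: for each $v\in V$, let $T^v$ be the output of the batch-greedy augmenting algorithm applied to $f^{\{v\}}$ on ground set $V\setminus\{v\}$ with parameters $r-1$ and $k-1$; let $L^v=\{u\in T^v: f^{\{v\}}(u\mid T^v\setminus\{u\})>0\}$, $S^v=L^v\cup\{v\}$; output a set $S^v$ maximizing $f(S^v)$.
   Context: $V$ is a finite set, $n=|V|$; $g(u\mid T)=g(T\cup\{u\})-g(T)$. Supermodular: $g(A)+g(B)\le g(A\cup B)+g(A\cap B)$; monotone: $g(B)\le g(A)$ for $B\subseteq A$. $\mathscr{F}_r$ is the family of nonnegative monotone supermodular $f:2^V\to\mathbb{R}_+$ admitting an $r$-decomposition: $V_1,\dots,V_m\subseteq V$ with $|V_i|\le r$ and nonnegative supermodular $f_i:2^{V_i}\to\mathbb{R}_+$ with $f(S)=\sum_i f_i(S\cap V_i)$. For nonempty $S\subseteq V$, $I_S=\{i:V_i\cap S\ne\emptyset\}$ and $f^S:2^{V\setminus S}\to\mathbb{R}$, $f^S(T)=\sum_{i\in I_S}\big(f_i((S\cup T)\cap V_i)-f_i(S\cap V_i)\big)$. The batch-greedy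 augmenting algorithm with function $g$ on ground set $U$ and integers $r',k'$: $T_0=\emptyset$, $t=\lfloor k'/r'\rfloor$; for $i=1,\dots,t$ choose an $r'$-subset $S_i$ of $U\setminus T_{i-1}$ maximizing $g(T_{i-1}\cup S_i)$, $T_i=T_{i-1}\cup S_i$; output any $k'$-subset of $U$ containing $T_t$. The underlying graph is $G=(V,E)$, $E=\bigcup_i\{uv:\{u,v\}\subseteq V_i,u\ne v\}$; a set $S$ is connected if $G[S]$ is connected; ''$V$ is connected'' means $G$ is connected. The $\underline{k}$SPM problem asks for $S\subseteq V$ with $|S|\le k$ maximizing $f(S)$ (no connectivity requirement). Constants in $O(\cdot)$ may depend on $r$. *)

(* Defs.v *)
From HB Require Import structures.
From mathcomp Require Import all_boot all_order all_algebra.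
Set Implicit Arguments. Unset Strict Implicit. Unset Printing Implicit Defensive.
Import Order.TTheory GRing.Theory Num.Theory.
Local Open Scope ring_scope.

Section Defs.
Variables (R : realFieldType) (T : finType).

Definition supermodular_on (W : {set T}) (g : {set T} -> R) : Prop :=
  forall A B : {set T}, A \subset W -> B \subset W ->
    g A + g B <= g (A :|: B) + g (A :&: B).

Definition nonneg_on (W : {set T}) (g : {set T} -> R) : Prop :=
  forall A : {set T}, A \subset W -> 0 <= g A.

Definition monotone (g : {set T} -> R) : Prop :=
  forall A B : {set T}, B \subset A -> g B <= g A.

(* An r-decomposition (V_i, f_i)_{i < m}; f_i is only evaluated on subsets of V_i *)
Definition is_r_decomposition (r m : nat) (Vs : 'I_m -> {set T})
    (fs : 'I_m -> {set T} -> R) : Prop :=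
  forall i, (#|Vs i| <= r)%N /\ nonneg_on (Vs i) (fs i) /\ supermodular_on (Vs i) (fs i).

Definition decomp_fun (m : nat) (Vs : 'I_m -> {set T}) (fs : 'I_m -> {set T} -> R)
    (S : {set T}) : R :=
  \sum_(i < m) fs i (S :&: Vs i).

Definition fsup (m : nat) (Vs : 'I_m -> {set T}) (fs : 'I_m -> {set T} -> R)
    (S X : {set T}) : R :=
  \sum_(i < m | Vs i :&: S != set0) (fs i ((S :|: X) :&: Vs i) - fs i (S :&: Vs i)).

(* X is a possible output of the batch-greedy augmenting algorithm with
   function g on ground set U and integers r', k' (all tie-breaking choices allowed) *)
Definition batch_greedy_output (g : {set T} -> R) (U : {set T}) (r' k' : nat)
    (X : {set T}) : Prop :=
  exists Ts : nat -> {set T},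
    Ts 0%N = set0 /\
    (forall i, (i < k' %/ r')%N ->
       exists Si : {set T},
         [/\ Si \subset U :\: Ts i, #|Si| = r', Ts i.+1 = Ts i :|: Si &
             forall S' : {set T}, S' \subset U :\: Ts i -> #|S'| = r' ->
               g (Ts i :|: S') <= g (Ts i :|: Si)]) /\
    [/\ X \subset U, #|X| = k' & Ts (k' %/ r')%N \subset X].

Definition adj (m : nat) (Vs : 'I_m -> {set T}) : rel T :=
  fun u v => (u != v) && [exists i, (u \in Vs i) && (v \in Vs i)].

Definition connected_set (m : nat) (Vs : 'I_m -> {set T}) (S : {set T}) : Prop :=
  forall x y, x \in S -> y \in S ->
    connect (fun a b => [&& adj Vs a b, a \in S & b \in S]) x y.

Definition star_set (m : nat) (Vs : 'I_m -> {set T}) (fs : 'I_m -> {set T} -> R)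
    (v : T) (Tv : {set T}) : {set T} :=
  [set u in Tv | 0 < fsup Vs fs [set v] Tv - fsup Vs fs [set v] (Tv :\ u)] :|: [set v].

Definition star_exploration_output (r k m : nat) (Vs : 'I_m -> {set T})
    (fs : 'I_m -> {set T} -> R) (S : {set T}) : Prop :=
  exists Tv : T -> {set T},
    (forall v, batch_greedy_output (fsup Vs fs [set v]) ([set: T] :\ v) r.-1 k.-1 (Tv v)) /\
    exists v0 : T,
      S = star_set Vs fs v0 (Tv v0) /\
      forall v, decomp_fun Vs fs (star_set Vs fs v (Tv v)) <=
                decomp_fun Vs fs (star_set Vs fs v0 (Tv v0)).

End Defs.

(* Main.v *)
Require Import Defs.
From HB Require Import structures.
From mathcomp Require Import all_boot all_order all_algebra.
From mathcomp Require Import lra zify ring.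
Import Order.TTheory GRing.Theory Num.Theory.

Module GenM.

Lemma card_bigcup_le (T : finType) (I : Type) (s : seq I) (P : pred I) (F : I -> {set T}) :
  (#|\bigcup_(x <- s | P x) F x| <= \sum_(x <- s | P x) #|F x|)%N.
Proof.
elim: s => [|x s IH]; first by rewrite !big_nil cards0.
rewrite !big_cons; case: (P x) => //.
apply: leq_trans (leq_card_setU _ _).1 _. by rewrite leq_add2l.
Qed.

Section Count.
Variable T : finType.

Definition Ks (Y : {set T}) (s : nat) : {set {set T}} :=
  [set Z : {set T} | (Z \subset Y) && (#|Z| <= s)%N].

Lemma card_Ks (Y : {set T}) s : (#|Ks Y s| <= (#|Y|.+1) ^ s)%N.
Proof.
elim: s => [|s IH].
  rewrite expn0; apply: leq_trans (_ : #|[set (set0 : {set T})]| <= 1)%N; last by rewrite cards1.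
  apply: subset_leq_card; apply/subsetP => Z; rewrite !inE => /andP[_].
  by rewrite leqn0 cards_eq0.
have sub : Ks Y s.+1 \subset Ks Y s :|: \bigcup_(x in Y) [set x |: Z | Z in Ks Y s].
  apply/subsetP => Z; rewrite !inE => /andP[ZY]; rewrite leq_eqVlt ltnS => /orP[/eqP cZ|cZ].
    apply/orP; right.
    have : Z != set0 by rewrite -card_gt0 cZ.
    case/set0Pn => x xZ.
    apply/bigcupP; exists x; first by apply: (subsetP ZY).
    apply/imsetP; exists (Z :\ x).
      rewrite !inE; rewrite (subset_trans (subsetDl _ _) ZY) /=.
      by move: cZ; rewrite (cardsD1 x Z) xZ add1n => -[->].
    by rewrite setD1K.
  by rewrite ZY cZ.
apply: leq_trans (subset_leq_card sub) _.
rewrite cardsU; apply: leq_trans (leq_subr _ _) _.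
have H0 : (#|\bigcup_(x in Y) [set x |: Z | Z in Ks Y s]| <= \sum_(x in Y) #|[set x |: Z | Z in Ks Y s]|)%N.
  exact: card_bigcup_le.
apply: leq_trans (leq_add (leqnn _) H0) _.
have H : (\sum_(x in Y) #|[set x |: Z | Z in Ks Y s]| <= \sum_(x in Y) #|Ks Y s|)%N.
  by apply: leq_sum => x _; apply: leq_imset_card.
apply: leq_trans (leq_add (leqnn _) H) _.
rewrite sum_nat_const expnS.
have : (#|Ks Y s| + #|Y| * #|Ks Y s| = #|Y|.+1 * #|Ks Y s|)%N by rewrite mulSn.
move=> ->; by rewrite leq_mul2l IH orbT.
Qed.

Lemma card_Ks_u (Y : {set T}) s u :
  (#|[set Z in Ks Y s.+1 | u \in Z]| <= #|Ks Y s|)%N.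
Proof.
apply: leq_trans (leq_imset_card (fun Z => u |: Z) (Ks Y s)).
apply: subset_leq_card; apply/subsetP => Z; rewrite !inE => /andP[/andP[ZY cZ] uZ].
apply/imsetP; exists (Z :\ u); last by rewrite setD1K.
rewrite !inE (subset_trans (subsetDl _ _) ZY) /=.
by move: cZ; rewrite (cardsD1 u Z) uZ.
Qed.

Lemma extend_set (Z W : {set T}) n :
  Z \subset W -> (#|Z| <= n)%N -> (n <= #|W|)%N ->
  exists Q : {set T}, [/\ Z \subset Q, Q \subset W & #|Q| = n].
Proof.
move=> ZW; elim: n => [|n IH].
  rewrite leqn0 cards_eq0 => /eqP -> _; by exists set0; split; rewrite ?sub0set ?cards0.
rewrite leq_eqVlt => /orP[/eqP cZ _|cZ nW].
  by exists Z; split; rewrite ?subxx ?cZ.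
have [Q [ZQ QW cQ]] := IH cZ (ltnW nW).
have : W :\: Q != set0.
  by rewrite -card_gt0 cardsDS // cQ subn_gt0.
case/set0Pn => x; rewrite inE => /andP[xQ xW].
exists (x |: Q); split; first exact: (subset_trans ZQ (subsetUr _ _)).
  by rewrite subUset sub1set xW QW.
by rewrite cardsU1 xQ cQ.
Qed.

End Count.
Arguments Ks {T}.
Arguments card_Ks {T}.
Arguments card_Ks_u {T}.
Arguments extend_set {T} [Z W n].
Lemma nat_final : forall k b t r r1 : nat, 0 < k -> 0 < b -> t <= k -> r1.+1 <= r ->
 1 + k + k * (3 * r1.+1 * b) + 3 * r1.+1 * b * (2 * t) * r <= (2 + 3 * r + 6 * r * r) * (k * b).
Proof.
move=> k b t r r1 k0 b0 tk rr.
have h1 : 1 <= k * b by rewrite muln_gt0 k0 b0.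
have h2 : k <= k * b by rewrite leq_pmulr.
have h3 : k * (3 * r1.+1 * b) <= 3 * r * (k * b).
  have : r1.+1 * (k * b) <= r * (k * b) by rewrite leq_mul2r rr orbT.
  have -> : k * (3 * r1.+1 * b) = 3 * (r1.+1 * (k * b)) by ring.
  have -> : 3 * r * (k * b) = 3 * (r * (k * b)) by ring.
  by rewrite leq_mul2l.
have h4 : 3 * r1.+1 * b * (2 * t) * r <= 6 * r * r * (k * b).
  have : r1.+1 * t <= r * k by apply: leq_mul.
  move=> H; have : r1.+1 * t * (6 * r * b) <= r * k * (6 * r * b) by rewrite leq_mul2r H orbT.
  have -> : 3 * r1.+1 * b * (2 * t) * r = r1.+1 * t * (6 * r * b) by ring.
  have -> : 6 * r * r * (k * b) = r * k * (6 * r * b) by ring.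
  done.
have -> : (2 + 3 * r + 6 * r * r) * (k * b) = 2 * (k * b) + 3 * r * (k * b) + 6 * r * r * (k * b) by ring.
lia.
Qed.
End GenM.
Import GenM.

Module MainM.
Local Open Scope ring_scope.
Set Implicit Arguments. Unset Strict Implicit. Unset Printing Implicit Defensive.

Section Main.
Variables (R : realFieldType) (T : finType) (m : nat)
  (Vs : 'I_m -> {set T}) (fs : 'I_m -> {set T} -> R) (r : nat).
Hypothesis Hdec : is_r_decomposition r Vs fs.

Lemma fs_ge0 i (A : {set T}) : A \subset Vs i -> 0 <= fs i A.
Proof. by have [_ [H _]] := Hdec i; apply: H. Qed.

Lemma fs_sm i (A B : {set T}) : A \subset Vs i -> B \subset Vs i ->
  fs i A + fs i B <= fs i (A :|: B) + fs i (A :&: B).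
Proof. by have [_ [_ H]] := Hdec i; apply: H. Qed.

Lemma fs_ge0I i (A : {set T}) : 0 <= fs i (A :&: Vs i).
Proof. exact/fs_ge0/subsetIr. Qed.

Lemma fs0_ge0 i : 0 <= fs i set0.
Proof. exact/fs_ge0/sub0set. Qed.

Lemma cardV i : (#|Vs i| <= r)%N.
Proof. by have [H _] := Hdec i. Qed.

Section V.
Variable v : T.

Lemma Iv_eq i : (Vs i :&: [set v] != set0) = (v \in Vs i).
Proof.
apply/set0Pn/idP => [[x]|vV]; first by rewrite !inE => /andP[xV /eqP <-].
by exists v; rewrite !inE vV eqxx.
Qed.

Definition dd i (X : {set T}) := fs i (([set v] :|: X) :&: Vs i) - fs i ([set v] :&: Vs i).
Definition hh (X : {set T}) := fsup Vs fs [set v] X.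
Definition NN := \sum_(i | v \in Vs i) fs i set0.
Definition PP := \sum_(i | v \in Vs i) fs i ([set v] :&: Vs i).

Lemma hh_eq (X : {set T}) : hh X = \sum_(i | v \in Vs i) dd i X.
Proof. by rewrite /hh /fsup; apply: eq_bigl => i; rewrite Iv_eq. Qed.

Lemma NN_ge0 : 0 <= NN.
Proof. by apply: sumr_ge0 => i _; apply: fs0_ge0. Qed.

Lemma PP_ge0 : 0 <= PP.
Proof. by apply: sumr_ge0 => i _; apply: fs_ge0I. Qed.

Lemma dd_lb i (X : {set T}) : - fs i set0 <= dd i X.
Proof.
have H := fs_sm (subsetIr [set v] (Vs i)) (subsetIr (X :\ v) (Vs i)).
have E1 : ([set v] :&: Vs i) :|: ((X :\ v) :&: Vs i) = ([set v] :|: X) :&: Vs i.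
  by apply/setP => x; rewrite !inE; case: (x == v); case: (x \in X); case: (x \in Vs i).
have E2 : ([set v] :&: Vs i) :&: ((X :\ v) :&: Vs i) = set0.
  by apply/setP => x; rewrite !inE; case: (x == v); case: (x \in X); case: (x \in Vs i).
rewrite E1 E2 in H.
have := fs_ge0 (subsetIr (X :\ v) (Vs i)).
rewrite /dd; lra.
Qed.

Lemma hh_lb (X : {set T}) : - NN <= hh X.
Proof. by rewrite hh_eq /NN -sumrN; apply: ler_sum => i _; apply: dd_lb. Qed.

Lemma hh0 : hh set0 = 0.
Proof. by rewrite hh_eq big1 // => i _; rewrite /dd setU0 subrr. Qed.

Lemma dd_sm i (X Y : {set T}) : dd i X + dd i Y <= dd i (X :|: Y) + dd i (X :&: Y).
Proof.
have H := fs_sm (subsetIr ([set v] :|: X) (Vs i)) (subsetIr ([set v] :|: Y) (Vs i)).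
have E1 : (([set v] :|: X) :&: Vs i) :|: (([set v] :|: Y) :&: Vs i) = ([set v] :|: (X :|: Y)) :&: Vs i.
  by apply/setP => x; rewrite !inE; case: (x == v); case: (x \in X); case: (x \in Y); case: (x \in Vs i).
have E2 : (([set v] :|: X) :&: Vs i) :&: (([set v] :|: Y) :&: Vs i) = ([set v] :|: (X :&: Y)) :&: Vs i.
  by apply/setP => x; rewrite !inE; case: (x == v); case: (x \in X); case: (x \in Y); case: (x \in Vs i).
rewrite E1 E2 in H; rewrite /dd; lra.
Qed.

Lemma hh_sm (X Y : {set T}) : hh X + hh Y <= hh (X :|: Y) + hh (X :&: Y).
Proof.
rewrite !hh_eq -!big_split /=; apply: ler_sum => i _; exact: dd_sm.
Qed.

Lemma hh_disj (X Y : {set T}) : X :&: Y = set0 -> hh X + hh Y <= hh (X :|: Y).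
Proof. by move=> E; have := hh_sm X Y; rewrite E hh0 addr0. Qed.

Lemma hh_marg (W T' : {set T}) u : W \subset T' -> u \in W ->
  hh W - hh (W :\ u) <= hh T' - hh (T' :\ u).
Proof.
move=> WT uW; have H := hh_sm W (T' :\ u).
have E1 : W :|: (T' :\ u) = T'.
  apply/setP => x; rewrite !inE; case: (boolP (x == u)) => [/eqP ->|_] /=.
    by rewrite uW (subsetP WT).
  by case: (boolP (x \in W)) => // /(subsetP WT) ->.
have E2 : W :&: (T' :\ u) = W :\ u.
  apply/setP => x; rewrite !inE.
  by case: (boolP (x \in W)) => [/(subsetP WT) ->|]; rewrite ?andbT ?andbF.
rewrite E1 E2 in H; lra.
Qed.

Definition LL (Tv : {set T}) := [set u in Tv | 0 < hh Tv - hh (Tv :\ u)].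

Lemma hh_L (Tv W : {set T}) : W \subset Tv -> hh W <= hh (W :&: LL Tv).
Proof.
move: {2}#|W| (leqnn #|W|) => n; elim: n W => [|n IH] W cW WT.
  by move: cW; rewrite leqn0 cards_eq0 => /eqP ->; rewrite set0I.
case: (boolP (W \subset LL Tv)) => [WL|/subsetPn [u uW uL]].
  by rewrite (setIidPl WL).
have uT : u \in Tv := subsetP WT u uW.
have H1 := hh_marg WT uW.
have H2 : hh Tv - hh (Tv :\ u) <= 0.
  by move: uL; rewrite inE uT /= ltNge negbK.
have cW' : (#|W :\ u| <= n)%N.
  by move: cW; rewrite (cardsD1 u W) uW add1n ltnS.
have := IH (W :\ u) cW' (subset_trans (subsetDl _ _) WT).
have -> : (W :\ u) :&: LL Tv = W :&: LL Tv.
  apply/setP => x; rewrite !inE; case: (boolP (x == u)) => [/eqP ->|] //=.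
  by move: uL; rewrite /LL inE => /negbTE ->; rewrite andbF.
lra.
Qed.

Lemma f_split (W : {set T}) : PP + hh W <= decomp_fun Vs fs ([set v] :|: W).
Proof.
rewrite /decomp_fun (bigID (fun i => v \in Vs i)) /=.
have H : 0 <= \sum_(i | v \notin Vs i) fs i (([set v] :|: W) :&: Vs i).
  by apply: sumr_ge0 => i _; apply: fs_ge0I.
suff -> : PP + hh W = \sum_(i | v \in Vs i) fs i (([set v] :|: W) :&: Vs i) by lra.
rewrite hh_eq /PP -big_split /=; apply: eq_bigr => i _; rewrite /dd; lra.
Qed.


Section Greedy.
Variables (k : nat) (Ts : nat -> {set T}).
Hypotheses (Hr : (1 < r)%N) (Hk : (r < k)%N) (HkT : (k <= #|T| - 1)%N) (HTs0 : Ts 0 = set0).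
Local Notation U := ([set: T] :\ v).
Local Notation t := (k.-1 %/ r.-1)%N.
Hypothesis Hstep : forall i, (i < t)%N -> exists Si : {set T},
  [/\ Si \subset U :\: Ts i, #|Si| = r.-1, Ts i.+1 = Ts i :|: Si &
      forall S' : {set T}, S' \subset U :\: Ts i -> #|S'| = r.-1 ->
        hh (Ts i :|: S') <= hh (Ts i :|: Si)].

Lemma t_facts : [/\ (0 < t)%N, (t * r.-1 <= k.-1)%N, (k <= 2 * r.-1 * t)%N & (t <= k)%N].
Proof.
have h1 := leq_divM k.-1 r.-1.
have h2 : (k.-1 < t.+1 * r.-1)%N by apply: ltn_ceil; lia.
have h3 : (0 < t)%N.
  rewrite divn_gt0; lia.
split => //.
- have : (t.+1 * r.-1 <= 2 * t * r.-1)%N by rewrite leq_mul2r; apply/orP; right; lia.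
  lia.
- have : (t <= t * r.-1)%N by rewrite leq_pmulr //; lia.
  lia.
Qed.

Lemma cardU : #|U| = (#|T|).-1.
Proof. by have := cardsD1 v [set: T]; rewrite cardsT inE add1n => ->. Qed.

Lemma Ts_props i : (i <= t)%N -> Ts i \subset U /\ #|Ts i| = (i * r.-1)%N.
Proof.
elim: i => [|i IH] Hi; first by rewrite HTs0 sub0set cards0.
have [Si [SiU cSi -> _]] := Hstep Hi.
have [TU cT] := IH (ltnW Hi).
have D : Ts i :&: Si = set0.
  apply/setP => x; rewrite !inE; case: (boolP (x \in Si)) => [/(subsetP SiU)|]; rewrite ?andbF //.
  by rewrite !inE => /andP[/negbTE ->].
split; first by rewrite subUset TU (subset_trans SiU (subsetDl _ _)).
by rewrite cardsU D cards0 subn0 cT cSi mulSn addnC.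
Qed.

Lemma Ts_step i : (i < t)%N -> Ts i \subset Ts i.+1.
Proof. by move=> Hi; have [Si [_ _ -> _]] := Hstep Hi; apply: subsetUl. Qed.

Lemma Ts_mono i j : (i <= j)%N -> (j <= t)%N -> Ts i \subset Ts j.
Proof.
move=> ij; elim: j ij => [|j IH]; first by rewrite leqn0 => /eqP ->.
rewrite leq_eqVlt => /orP[/eqP -> //|]; rewrite ltnS => ij jt.
exact: subset_trans (IH ij (ltnW jt)) (Ts_step jt).
Qed.

Lemma gain_lb j : (j < t)%N -> - NN <= hh (Ts j.+1) - hh (Ts j).
Proof.
move=> jt; have [Si [SiU _ E _]] := Hstep jt.
have D : Ts j :&: Si = set0.
  apply/setP => x; rewrite !inE; case: (boolP (x \in Si)) => [/(subsetP SiU)|]; rewrite ?andbF //.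
  by rewrite !inE => /andP[/negbTE ->].
have := hh_disj D; have := hh_lb Si; rewrite E; lra.
Qed.

Lemma greedy_bound j (Z : {set T}) : (j < t)%N -> Z \subset U :\: Ts j -> (#|Z| <= r.-1)%N ->
  hh Z <= hh (Ts j.+1) - hh (Ts j) + NN.
Proof.
move=> jt ZU cZ.
have [Si [SiU cSi E Hmax]] := Hstep jt.
have [TU cT] := Ts_props (ltnW jt).
have [_ tf _ _] := t_facts.
have cUD : (r.-1 <= #|U :\: Ts j|)%N.
  rewrite cardsDS // cardU cT.
  have : (j.+1 * r.-1 <= t * r.-1)%N by rewrite leq_mul2r jt orbT.
  lia.
have [Q [ZQ QU cQ]] := extend_set ZU cZ cUD.
have H1 := Hmax Q QU cQ.
have D : Ts j :&: Q = set0.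
  apply/setP => x; rewrite !inE; case: (boolP (x \in Q)) => [/(subsetP QU)|]; rewrite ?andbF //.
  by rewrite !inE => /andP[/negbTE ->].
have H2 := hh_disj D.
have D2 : Z :&: (Q :\: Z) = set0.
  by apply/setP => x; rewrite !inE; case: (x \in Z); rewrite ?andbF.
have H3 := hh_disj D2.
have E3 : Z :|: (Q :\: Z) = Q.
  apply/setP => x; rewrite !inE; case: (boolP (x \in Z)) => [/(subsetP ZQ) -> //|] //=.
rewrite E3 in H3.
have H4 := hh_lb (Q :\: Z).
rewrite E; lra.
Qed.


Lemma exp_mono (a b e : nat) : (a <= b)%N -> (a ^ e <= b ^ e)%N.
Proof. by move=> ab; elim: e => // e IH; rewrite !expnS leq_mul. Qed.

Lemma sub_UD (Z A B : {set T}) : Z \subset A -> Z :&: B = set0 -> Z \subset A :\: B.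
Proof. by move=> ZA ZB; rewrite subsetD ZA -setI_eq0 ZB eqxx. Qed.

Lemma hY_bound (Y : {set T}) : Y \subset U -> (#|Y| <= k.-1)%N ->
  hh Y <= (3 * r.-1 * k ^ r.-2)%:R * (hh (Ts t) + (2 * t)%:R * NN).
Proof.
move=> YU cY.
have [t0 tf ktr tk] := t_facts.
pose s := r.-2.
have rs : r.-1 = s.+1 by rewrite /s; lia.
pose G := fun j : nat => (hh (Ts j.+1) - hh (Ts j)) + 2%:R * NN.
have G0 : forall j, (j < t)%N -> 0 <= G j.
  move=> j jt; have := gain_lb jt; have := NN_ge0; rewrite /G; lra.
have SG : \sum_(j < t) G j = hh (Ts t) + (2 * t)%:R * NN.
  rewrite big_split /= sumr_const card_ord.
  rewrite -(big_mkord xpredT (fun j => hh (Ts j.+1) - hh (Ts j))) telescope_sumr // HTs0 hh0.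
  by rewrite subr0 natrM -mulr_natr; ring.
pose w := fun Z : {set T} => \sum_(i | (v \in Vs i) && (Y :&: Vs i == Z)) dd i Z.
have Hpart : hh Y = \sum_(Z in Ks Y r.-1) w Z.
  rewrite hh_eq (partition_big (fun i => Y :&: Vs i) (fun Z : {set T} => Z \in Ks Y r.-1)) /=.
    apply: eq_bigr => Z _; apply: eq_bigr => i /andP[_ /eqP E]; rewrite -E /dd.
    congr (fs i _ - _); apply/setP => x; rewrite !inE.
    by case: (x == v); case: (x \in Y); case: (x \in Vs i).
  move=> i vV; rewrite inE subsetIl /=.
  have vY : v \notin Y by apply/negP => /(subsetP YU); rewrite !inE eqxx.
  have : Y :&: Vs i \subset Vs i :\ v.
    apply/subsetP => x; rewrite !inE => /andP[xY ->]; rewrite andbT.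
    by apply/negP => /eqP E; move: vY; rewrite -E xY.
  move/subset_leq_card; have := cardsD1 v (Vs i); rewrite vV add1n.
  have := cardV i; lia.
have Hw : forall Z, w Z <= hh Z + NN.
  move=> Z.
  have E1 : hh Z = w Z + \sum_(i | (v \in Vs i) && ~~ (Y :&: Vs i == Z)) dd i Z.
    by rewrite hh_eq (bigID (fun i => Y :&: Vs i == Z)).
  have E2 : NN = \sum_(i | (v \in Vs i) && (Y :&: Vs i == Z)) fs i set0 +
                 \sum_(i | (v \in Vs i) && ~~ (Y :&: Vs i == Z)) fs i set0.
    by rewrite /NN (bigID (fun i => Y :&: Vs i == Z)).
  have A1 : 0 <= \sum_(i | (v \in Vs i) && (Y :&: Vs i == Z)) fs i set0.
    by apply: sumr_ge0 => i _; apply: fs0_ge0.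
  have A2 : - \sum_(i | (v \in Vs i) && ~~ (Y :&: Vs i == Z)) fs i set0 <=
            \sum_(i | (v \in Vs i) && ~~ (Y :&: Vs i == Z)) dd i Z.
    by rewrite -sumrN; apply: ler_sum => i _; apply: dd_lb.
  lra.
have HG : forall j Z, (j < t)%N -> Z \in Ks Y r.-1 -> Z :&: Ts j = set0 -> w Z <= G j.
  move=> j Z jt; rewrite inE => /andP[ZY cZ] ZT.
  have := greedy_bound jt (sub_UD (subset_trans ZY YU) ZT) cZ.
  have := Hw Z; rewrite /G; lra.
have Hnever : forall Z, Z \in Ks Y r.-1 -> Z :&: Ts t == set0 -> t%:R * w Z <= \sum_(j < t) G j.
  move=> Z ZK /eqP ZT.
  have -> : t%:R * w Z = \sum_(j < t) w Z by rewrite sumr_const card_ord mulr_natl.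
  apply: ler_sum => j _; apply: HG => //.
  apply/eqP; rewrite -subset0 -ZT; apply: setIS; apply: Ts_mono => //; exact: ltnW.
have Hkilled : forall Z, Z \in Ks Y r.-1 -> Z :&: Ts t != set0 ->
   w Z <= \sum_(j < t) (if Z :&: (Ts j.+1 :\: Ts j) != set0 then G j else 0).
  move=> Z ZK ZT.
  have exP : exists n, Z :&: Ts n != set0 by exists t.
  case: (ex_minnP exP) => j0 Pj0 minj0.
  have j0t : (j0 <= t)%N := minj0 t ZT.
  have j0pos : (0 < j0)%N.
    by move: Pj0; case: (j0) => //; rewrite HTs0 setI0 eqxx.
  have jt : (j0.-1 < t)%N by lia.
  have ZTj : Z :&: Ts j0.-1 = set0.
    case: (boolP (Z :&: Ts j0.-1 == set0)) => [/eqP //| H]; have := minj0 _ H; lia.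
  have Hc : Z :&: (Ts j0.-1.+1 :\: Ts j0.-1) != set0.
    rewrite prednK //; case/set0Pn: Pj0 => x; rewrite inE => /andP[xZ xT].
    apply/set0Pn; exists x; rewrite !inE xZ xT andbT; apply/negP => xT'.
    have : x \in Z :&: Ts j0.-1 by rewrite inE xZ xT'.
    by rewrite ZTj inE.
  apply: le_trans (HG _ _ jt ZK ZTj) _.
  rewrite (bigD1 (Ordinal jt)) //= Hc lerDl; apply: sumr_ge0 => i _; case: ifP => // _.
  exact: G0.
have Hcount : forall j, (j < t)%N ->
   (#|[set Z in Ks Y r.-1 | Z :&: (Ts j.+1 :\: Ts j) != set0]| <= r.-1 * k ^ s)%N.
  move=> j jt.
  have sub : [set Z in Ks Y r.-1 | Z :&: (Ts j.+1 :\: Ts j) != set0] \subset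
             \bigcup_(u in Ts j.+1 :\: Ts j) [set Z in Ks Y s.+1 | u \in Z].
    apply/subsetP => Z; rewrite inE => /andP[ZK /set0Pn[u]]; rewrite inE => /andP[uZ uS].
    by apply/bigcupP; exists u => //; rewrite inE -rs ZK uZ.
  apply: leq_trans (subset_leq_card sub) _.
  have H0 : (#|\bigcup_(u in Ts j.+1 :\: Ts j) [set Z in Ks Y s.+1 | u \in Z]| <=
             \sum_(u in Ts j.+1 :\: Ts j) #|[set Z in Ks Y s.+1 | u \in Z]|)%N.
    exact: card_bigcup_le.
  apply: leq_trans H0 _.
  have H1 : (\sum_(u in Ts j.+1 :\: Ts j) #|[set Z in Ks Y s.+1 | u \in Z]| <=
             \sum_(u in Ts j.+1 :\: Ts j) #|Ks Y s|)%N.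
    by apply: leq_sum => u _; apply: card_Ks_u.
  apply: leq_trans H1 _.
  rewrite sum_nat_const.
  have cS : #|Ts j.+1 :\: Ts j| = r.-1.
    rewrite cardsDS ?Ts_step //; have [_ c1] := Ts_props jt; have [_ c2] := Ts_props (ltnW jt).
    by rewrite c1 c2 mulSn addnK.
  rewrite cS leq_mul2l; apply/orP; right.
  apply: leq_trans (card_Ks Y s) _; apply: exp_mono; lia.
rewrite Hpart (bigID (fun Z => Z :&: Ts t == set0)) /=.
set q := (\sum_(j < t) G j) / t%:R.
have tpos : 0 < (t%:R : R) by rewrite ltr0n.
have q0 : 0 <= q.
  by rewrite /q divr_ge0 ?ler0n //; apply: sumr_ge0 => j _; apply: G0.
have Eq : \sum_(j < t) G j = q * t%:R by rewrite /q divfK // gt_eqF.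
have B1 : \sum_(Z in Ks Y r.-1 | Z :&: Ts t == set0) w Z <= #|Ks Y r.-1|%:R * q.
  apply: le_trans (_ : \sum_(Z in Ks Y r.-1 | Z :&: Ts t == set0) q <= _).
    apply: ler_sum => Z /andP[ZK ZT]; rewrite /q ler_pdivlMr // mulrC; exact: Hnever.
  have -> : #|Ks Y r.-1|%:R * q = \sum_(Z in Ks Y r.-1) q by rewrite sumr_const mulr_natl.
  by rewrite big_mkcondr /=; apply: ler_sum => Z _; case: ifP.
have B2 : \sum_(Z in Ks Y r.-1 | ~~ (Z :&: Ts t == set0)) w Z <=
          \sum_(j < t) G j * (r.-1 * k ^ s)%:R.
  apply: le_trans (_ : \sum_(Z in Ks Y r.-1 | ~~ (Z :&: Ts t == set0))
     \sum_(j < t) (if Z :&: (Ts j.+1 :\: Ts j) != set0 then G j else 0) <= _).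
    by apply: ler_sum => Z /andP[ZK ZT]; apply: Hkilled.
  apply: le_trans (_ : \sum_(Z in Ks Y r.-1)
     \sum_(j < t) (if Z :&: (Ts j.+1 :\: Ts j) != set0 then G j else 0) <= _).
    rewrite big_mkcondr /=; apply: ler_sum => Z _; case: ifP => // _.
    by apply: sumr_ge0 => j _; case: ifP => // _; apply: G0.
  rewrite exchange_big /=; apply: ler_sum => j _.
  rewrite -big_mkcondr.
  have -> : \sum_(Z | (Z \in Ks Y r.-1) && (Z :&: (Ts j.+1 :\: Ts j) != set0)) G j =
            \sum_(Z in [set Z in Ks Y r.-1 | Z :&: (Ts j.+1 :\: Ts j) != set0]) G j.
    by apply: eq_bigl => Z; rewrite inE.
  rewrite sumr_const -(mulr_natr (G j)); apply: (ler_wpM2l (G0 j (ltn_ord j))).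
  by rewrite ler_nat; apply: Hcount.
have cK : (#|Ks Y r.-1| <= k ^ s.+1)%N.
  by rewrite rs; apply: leq_trans (card_Ks Y s.+1) (exp_mono _ _); lia.
have kk : (k ^ s.+1 <= 2 * r.-1 * t * k ^ s)%N by rewrite expnS leq_mul2r ktr orbT.
have nat_ineq : (#|Ks Y r.-1| + t * (r.-1 * k ^ s) <= 3 * r.-1 * k ^ s * t)%N.
  have H2 := leq_trans cK kk; move: H2.
  set a := #|Ks Y r.-1|; set b := (k ^ s)%N; set c := r.-1; set d := t; nia.
have Hn : ((#|Ks Y r.-1| + t * (r.-1 * k ^ s))%:R <= (3 * r.-1 * k ^ s * t)%:R :> R).
  by rewrite ler_nat.
have H := ler_wpM2r q0 Hn.
apply: le_trans (lerD B1 B2) _.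
rewrite -mulr_suml -SG Eq.
move: H; rewrite !natrD !natrM /s => H.
apply: (le_trans _ (le_trans H _)).
  by rewrite le_eqVlt; apply/orP; left; apply/eqP; ring.
by rewrite le_eqVlt; apply/orP; left; apply/eqP; ring.
Qed.

End Greedy.

End V.

Lemma f_decomp_bound (X : {set T}) :
  decomp_fun Vs fs X <= decomp_fun Vs fs set0 + \sum_(v in X) (PP v + hh v (X :\ v)).
Proof.
rewrite (eq_bigr (fun v => \sum_(i | v \in Vs i) fs i (X :&: Vs i))); last first.
  move=> v vX; rewrite hh_eq /PP -big_split /=; apply: eq_bigr => i _.
  by rewrite /dd setD1K // addrC subrK.
have -> : \sum_(v in X) \sum_(i | v \in Vs i) fs i (X :&: Vs i) =
          \sum_(v in X) \sum_i (if v \in Vs i then fs i (X :&: Vs i) else 0).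
  by apply: eq_bigr => v _; rewrite big_mkcond.
rewrite exchange_big /= /decomp_fun -big_split /=; apply: ler_sum => i _.
rewrite set0I.
case: (boolP (X :&: Vs i == set0)) => [/eqP ->|].
  by rewrite lerDl; apply: sumr_ge0 => v _; case: ifP => // _; apply: fs0_ge0.
case/set0Pn => v; rewrite inE => /andP[vX vV].
rewrite (bigD1 v) //= vV.
have := fs0_ge0 i.
have : 0 <= \sum_(j in X | j != v) (if j \in Vs i then fs i (X :&: Vs i) else 0).
  by apply: sumr_ge0 => j _; case: ifP => // _; apply: fs_ge0I.
lra.
Qed.

Lemma NN_sum (X : {set T}) : \sum_(v in X) NN v <= r%:R * decomp_fun Vs fs set0.
Proof.
have -> : \sum_(v in X) NN v = \sum_(v in X) \sum_i (if v \in Vs i then fs i set0 else 0).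
  by apply: eq_bigr => v _; rewrite /NN big_mkcond.
rewrite exchange_big /= /decomp_fun mulr_sumr; apply: ler_sum => i _.
rewrite set0I.
apply: le_trans (_ : \sum_v (if v \in Vs i then fs i set0 else 0) <= _).
  rewrite [X in _ <= X](bigID (fun v => v \in X)) /= lerDl.
  by apply: sumr_ge0 => v _; case: ifP => // _; apply: fs0_ge0.
rewrite -big_mkcond sumr_const -(mulr_natl (fs i set0)).
by apply: ler_wpM2r; [exact: fs0_ge0 | rewrite ler_nat cardV].
Qed.

End Main.
End MainM.
Import MainM.

Local Open Scope ring_scope.

Theorem corollary1 (r : nat) (r_gt1 : (1 < r)%N) :
  exists C : nat,
  forall (R : realFieldType) (T : finType) (m : nat)
         (Vs : 'I_m -> {set T}) (fs : 'I_m -> {set T} -> R) (k : nat),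
    is_r_decomposition r Vs fs ->
    monotone (decomp_fun Vs fs) ->
    (r < k)%N -> (k <= #|T| - 1)%N ->
    connected_set Vs [set: T] ->
    forall S : {set T}, star_exploration_output r k Vs fs S ->
      [/\ connected_set Vs S, (#|S| <= k)%N &
          forall X : {set T}, (#|X| <= k)%N ->
            decomp_fun Vs fs X <= C%:R * (k ^ r.-1)%:R * decomp_fun Vs fs S].
Proof.
exists (2 + 3 * r + 6 * r * r)%N.
move=> R T m Vs fs k Hdec Hmono Hk HkT _ S [Tv [HTv [v0 [ES Hmax]]]].
have k1 : (0 < k)%N by lia.
have HFv : forall v, decomp_fun Vs fs (star_set Vs fs v (Tv v)) <= decomp_fun Vs fs S.
  by move=> v; rewrite ES; apply: Hmax.
pose L := [set u in Tv v0 | 0 < fsup Vs fs [set v0] (Tv v0) - fsup Vs fs [set v0] (Tv v0 :\ u)].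
have ES' : S = L :|: [set v0] by rewrite ES.
have adjL : forall u, u \in L -> adj Vs u v0 && adj Vs v0 u.
  move=> u; rewrite inE => /andP[uT Hpos].
  have [Ts [_ [_ [TvU _ _]]]] := HTv v0.
  have uv : u != v0 by move: (subsetP TvU u uT); rewrite !inE => /andP[].
  have : [exists i, (u \in Vs i) && (v0 \in Vs i)].
    case: (boolP [exists i, (u \in Vs i) && (v0 \in Vs i)]) => // Hn; exfalso.
    have Eq : fsup Vs fs [set v0] (Tv v0) = fsup Vs fs [set v0] (Tv v0 :\ u).
      rewrite /fsup; apply: eq_bigr => i; rewrite Iv_eq => vV.
      have uV : u \notin Vs i.
        by apply/negP => uV; apply: (negP Hn); apply/existsP; exists i; rewrite uV vV.
      congr (fs i _ - _); apply/setP => x; rewrite !inE.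
      case: (boolP (x == u)) => [/eqP ->|] //=.
      by rewrite (negbTE uV) !andbF.
    by move: Hpos; rewrite Eq subrr ltxx.
  case/existsP => i /andP[uV vV].
  rewrite /adj uv eq_sym uv /=; apply/andP; split; apply/existsP; exists i;
    by rewrite ?uV ?vV.
split.
- have toV : forall x, x \in S ->
     connect (fun a b => [&& adj Vs a b, a \in S & b \in S]) x v0 /\
     connect (fun a b => [&& adj Vs a b, a \in S & b \in S]) v0 x.
    move=> x xS; have v0S : v0 \in S by rewrite ES' !inE eqxx orbT.
    move: (xS); rewrite ES' in_setU in_set1 => /orP[xL|/eqP ->]; last by split; apply: connect0.
    have /andP[a1 a2] := adjL x xL.
    by split; apply: connect1; rewrite ?a1 ?a2 !in_setU !in_set1 xL eqxx ?orbT.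
  move=> x y xS yS; exact: connect_trans (toV x xS).1 (toV y yS).2.
- have [Ts [_ [_ [_ cTv _]]]] := HTv v0.
  rewrite ES' setUC cardsU1.
  have : (#|L| <= #|Tv v0|)%N by apply: subset_leq_card; apply/subsetP => u; rewrite inE => /andP[].
  case: (v0 \notin L); lia.
move=> X cX.
set F := decomp_fun Vs fs S.
have f00 : 0 <= decomp_fun Vs fs set0 by apply: sumr_ge0 => i _; apply: (fs_ge0I Hdec).
have f0F : decomp_fun Vs fs set0 <= F by apply: Hmono; apply: sub0set.
have F0 : 0 <= F by lra.
pose t := (k.-1 %/ r.-1)%N.
have [t0 tf ktr tk] := t_facts r_gt1 Hk HkT.
pose c1 := (3 * r.-1 * k ^ r.-2)%N.
pose c2 := (c1 * (2 * t))%N.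
have per : forall v, v \in X -> PP Vs fs v + hh Vs fs v (X :\ v) <=
                          F + c1%:R * F + c2%:R * NN Vs fs v.
  move=> v vX.
  have [Ts [HT0 [Hst [TvU cTv TsTv]]]] := HTv v.
  have HY : hh Vs fs v (X :\ v) <= c1%:R * (hh Vs fs v (Ts t) + (2 * t)%:R * NN Vs fs v).
    apply: (hY_bound Hdec r_gt1 Hk HkT HT0 Hst).
      by apply: setSD; apply: subsetT.
    by move: cX; rewrite (cardsD1 v X) vX add1n; lia.
  have HA : PP Vs fs v + hh Vs fs v (Ts t) <= F.
    have TsTv' : Ts t \subset Tv v := TsTv.
    have H1 := hh_L Hdec v TsTv'.
    have H2 := f_split Hdec v (Ts t :&: LL Vs fs v (Tv v)).
    have sub : [set v] :|: (Ts t :&: LL Vs fs v (Tv v)) \subset star_set Vs fs v (Tv v).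
      by rewrite /star_set setUC; apply: setSU; apply: subsetIr.
    have H3 := Hmono _ _ sub.
    have := HFv v; rewrite -/F; lra.
  have HP : PP Vs fs v <= F.
    have H2 := f_split Hdec v set0; rewrite hh0 setU0 addr0 in H2.
    have H3 := Hmono _ _ (subsetUr _ _ : [set v] \subset star_set Vs fs v (Tv v)).
    have := HFv v; rewrite -/F; lra.
  have PP0 := PP_ge0 Hdec v.
  have NN0 := NN_ge0 Hdec v.
  have HA' : c1%:R * hh Vs fs v (Ts t) <= c1%:R * F.
    by apply: ler_wpM2l; [rewrite ler0n | lra].
  have Ec : c2%:R * NN Vs fs v = c1%:R * ((2 * t)%:R * NN Vs fs v) by rewrite /c2 natrM mulrA.
  rewrite mulrDr in HY.
  lra.
have S1 := f_decomp_bound Hdec X.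
have S2 : \sum_(v in X) (PP Vs fs v + hh Vs fs v (X :\ v)) <=
          \sum_(v in X) (F + c1%:R * F + c2%:R * NN Vs fs v) by apply: ler_sum.
have S3 : \sum_(v in X) (F + c1%:R * F + c2%:R * NN Vs fs v) =
          #|X|%:R * (F + c1%:R * F) + c2%:R * \sum_(v in X) NN Vs fs v.
  by rewrite big_split /= sumr_const -[_ *+ #|X|]mulr_natl -mulr_sumr.
have S4 := NN_sum Hdec X.
have S5 : #|X|%:R * (F + c1%:R * F) <= k%:R * (F + c1%:R * F).
  apply: ler_wpM2r; last by rewrite ler_nat.
  have : 0 <= c1%:R * F by apply: mulr_ge0; rewrite ?ler0n.
  lra.
have S6 : c2%:R * \sum_(v in X) NN Vs fs v <= c2%:R * (r%:R * F).
  apply: ler_wpM2l; first by rewrite ler0n.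
  apply: le_trans S4 _; apply: ler_wpM2l; first by rewrite ler0n.
  exact: f0F.
have nat_ineq : (1 + k + k * c1 + c2 * r <= (2 + 3 * r + 6 * r * r) * k ^ r.-1)%N.
  rewrite /c2 /c1.
  set r1 := r.-2.
  have rs : r.-1 = r1.+1 by rewrite /r1; lia.
  rewrite rs expnS; apply: nat_final => //; first by rewrite expn_gt0 k1.
  lia.
have Hn : ((1 + k + k * c1 + c2 * r)%:R * F <= ((2 + 3 * r + 6 * r * r) * k ^ r.-1)%:R * F :> R).
  by apply: ler_wpM2r => //; rewrite ler_nat.
rewrite -natrM; apply: le_trans Hn.
have E : (1 + k + k * c1 + c2 * r)%:R * F =
         F + k%:R * (F + c1%:R * F) + c2%:R * (r%:R * F) :> R.
  by rewrite !natrD !natrM; ring.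
rewrite E.
lra.
Qed.
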